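(* Fix an integer $k\ge 1$. For integers $a<b$ with $b-a\le k$, and $c<d$ with $d-c\le k$, write $\bar a,\bar b,\bar c,\bar d$ for the residues of $a,b,c,d$ modulo $k+1$. For every $u\in W^0$ the following hold, where $u\,\mathbf{t}_{ab}\mathbf{t}_{cd}$ means $(u\,\mathbf{t}_{ab})\,\mathbf{t}_{cd}$ and all operators written are assumed to have index differences between $1$ and $k$: (A) If $\bar a,\bar b,\bar c,\bar d$ are pairwise distinct, then $u\,\mathbf{t}_{ab}\mathbf{t}_{cd}=u\,\mathbf{t}_{cd}\mathbf{t}_{ab}$. (B1) If $a<c<b<d$, or if $b=c$ and $d-a>k+1$, then $u\,\mathbf{t}_{ab}\mathbf{t}_{cd}=u\,\mathbf{t}_{cd}\mathbf{t}_{ab}=0$. (B2) If ($\bar a=\bar c$ and $b\le d$) or ($\bar b=\bar d$ and $c\le a$), then $u\,\mathbf{t}_{ab}\mathbf{t}_{cd}=0$. (C1) If $a<b<d$ and $d-a=k+1$, then $u\,\mathbf{t}_{ab}\mathbf{t}_{bd}=u\,\mathbf{t}_{ab}\mathbf{t}_{b-k-1,a}$. (D) If $a<b<c<d$, $\bar b=\bar c$, $\bar d=\bar a$ and $(b-a)+(d-c)=k+1$, then $u\,\mathbf{t}_{ab}\mathbf{t}_{cd}=u\,\mathbf{t}_{d-k-1,c}\mathbf{t}_{b-k-1,a}$. (E1) If $a<b<c<d$ with $c-a\le k$ and $d-b\le k$, then $u\,\mathbf{t}_{bc}\mathbf{t}_{cd}\mathbf{t}_{ac}=u\,\mathbf{t}_{bd}\mathbf{t}_{ab}\mathbf{t}_{bc}$.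 (E2) If $a<b<c<d$ with $c-a\le k$ and $d-b\le k$, then $u\,\mathbf{t}_{ac}\mathbf{t}_{cd}\mathbf{t}_{bc}=u\,\mathbf{t}_{bc}\mathbf{t}_{ab}\mathbf{t}_{bd}$. (F) If $a<b<c$ and $c-a<k+1$, then $u\,\mathbf{t}_{bc}\mathbf{t}_{ab}\mathbf{t}_{bc}=u\,\mathbf{t}_{ab}\mathbf{t}_{bc}\mathbf{t}_{ab}=0$.
   Context: Fix an integer $k\ge1$. The affine symmetric group $W$ is the group of bijections $u:\mathbb Z\to\mathbb Z$ with $u(i+k+1)=u(i)+k+1$ for all $i$ and $u(1)+\cdots+u(k+1)=\binom{k+2}{2}$; the product is composition, $(uw)(i)=u(w(i))$. It is generated by $s_0,\dots,s_k$, where $s_i$ swaps $i+m(k+1)$ and $i+1+m(k+1)$ for all $m\in\mathbb Z$ and fixes everything else; $\ell(u)$ is the Coxeter length (minimal number of generators in an expression for $u$). For integers $a<b$ with $b-a\le k$, $t_{a,b}\in W$ is the element swapping $a+m(k+1)$ and $b+m(k+1)$ for all $m$ (so $(ut_{a,b})(a)=u(b)$). The set $W^0$ of affine $0$-grassmannian permutations consists of those $u\in W$ in which the values $1,2,\dots,k+1$ appear from left to right, i.e. $u^{-1}(1)<u^{-1}(2)<\cdots<u^{-1}(k+1)$. The operator $\mathbf{t}_{ab}$ on $\mathbb ZW$ acts on the right by $u\,\mathbf{t}_{ab}=u\,t_{a,b}$ if $\ell(ut_{a,b})=\ell(u)+1$ and $u(a)\le 0<u(b)$, and $u\,\mathbf{t}_{ab}=0$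 otherwise, extended linearly (with $0\,\mathbf{t}_{cd}=0$). (It is a known fact that $\ell(ut_{a,b})=\ell(u)+1$ iff $u(a)<u(b)$ and every $a<i<b$ has $u(i)<u(a)$ or $u(i)>u(b)$.) *)

(* Defs.v *)
From Stdlib Require Import ZArith List Classical ClassicalEpsilon FunctionalExtensionality.
Import ListNotations.
Open Scope Z_scope.

Definition gen (k i : Z) (j : Z) : Z :=
  if Z.eqb (j mod (k+1)) (i mod (k+1)) then j + 1
  else if Z.eqb (j mod (k+1)) ((i+1) mod (k+1)) then j - 1
  else j.

Definition tr (k a b : Z) (j : Z) : Z :=
  if Z.eqb (j mod (k+1)) (a mod (k+1)) then j + (b - a)
  else if Z.eqb (j mod (k+1)) (b mod (k+1)) then j - (b - a)
  else j.

Definition inW (k : Z) (u : Z -> Z) : Prop :=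
  (forall x y, u x = u y -> x = y) /\ (forall y, exists x, u x = y) /\
  (forall i, u (i + (k+1)) = u i + (k+1)) /\
  fold_right Z.add 0 (map (fun n : nat => u (Z.of_nat n)) (seq 1 (Z.to_nat (k+1))))
    = (k+2) * (k+1) / 2.

(* Affine 0-grassmannian permutations: u^{-1}(1) < ... < u^{-1}(k+1). *)
Definition inW0 (k : Z) (u : Z -> Z) : Prop :=
  inW k u /\
  (forall i j, 1 <= u i -> u j = u i + 1 -> u j <= k+1 -> i < j).

(* Product of a word s_{i1} ... s_{in}, with (uw)(i) = u(w(i)). *)
Definition word_prod (k : Z) (w : list Z) : Z -> Z :=
  fold_right (fun i f => fun j => gen k i (f j)) (fun j => j) w.

Definition valid_word (k : Z) (w : list Z) : Prop :=
  Forall (fun i => 0 <= i <= k) w.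

Definition has_length (k : Z) (u : Z -> Z) (n : nat) : Prop :=
  (exists w, valid_word k w /\ length w = n /\ word_prod k w = u) /\
  (forall w, valid_word k w -> word_prod k w = u -> (n <= length w)%nat).

Definition length_up (k a b : Z) (u : Z -> Z) : Prop :=
  exists n, has_length k u n /\ has_length k (fun j => u (tr k a b j)) (S n).

(* Elements of Z W of the form "a group element or 0" are represented by
   option (Z -> Z): Some u for u, None for 0. *)
Definition top_cond (k a b : Z) (u : Z -> Z) : Prop :=
  length_up k a b u /\ u a <= 0 < u b.

Definition top (k a b : Z) (x : option (Z -> Z)) : option (Z -> Z) :=
  match x with
  | None => None
  | Some u =>
      if excluded_middle_informative (top_cond k a b u)
      then Some (fun j => u (tr k a b j)) else None
  end.

Definition okd (k a b : Z) : Prop := 1 <= b - a <= k.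

Definition res (k a : Z) : Z := a mod (k+1).

(* Main.v *)
Require Import Defs.
From Stdlib Require Import ZArith.
From Stdlib Require Import Lia List Classical ClassicalEpsilon FunctionalExtensionality.
Import ListNotations.
Open Scope Z_scope.

Lemma modeq_ex : forall n x y, 0 < n -> x mod n = y mod n -> exists m, x = y + m * n.
Proof.
  intros n x y Hn H. exists (x / n - y / n).
  pose proof (Z.div_mod x n ltac:(lia)). pose proof (Z.div_mod y n ltac:(lia)).
  rewrite H in H0. nia.
Qed.

Lemma mod_trans : forall n y m, (y + m * n) mod n = y mod n.
Proof. intros. apply Z_mod_plus_full. Qed.

Lemma small_neq : forall n x y, 0 < n -> x < y < x + n -> y mod n <> x mod n.
Proof.
  intros n x y Hn Hr H. destruct (modeq_ex n y x Hn H) as [m Hm].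
  assert (m <= 0 \/ m >= 1) as [|] by lia; nia.
Qed.

Lemma modeq_shift : forall n j a c, 0 < n -> j mod n = a mod n -> (j + (c - a)) mod n = c mod n.
Proof.
  intros n j a c Hn H. destruct (modeq_ex n j a Hn H) as [m ->].
  replace (a + m * n + (c - a)) with (c + m * n) by ring. apply mod_trans.
Qed.

Lemma okd_neq : forall k a b, 1 <= k -> okd k a b -> b mod (k+1) <> a mod (k+1).
Proof. unfold okd. intros. apply small_neq; lia. Qed.

Lemma tr_a_gen : forall k a b j, j mod (k+1) = a mod (k+1) -> tr k a b j = j + (b - a).
Proof. intros. unfold tr. rewrite H, Z.eqb_refl. reflexivity. Qed.

Lemma tr_b_gen : forall k a b j, 1 <= k -> okd k a b -> j mod (k+1) = b mod (k+1) -> tr k a b j = j - (b - a).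
Proof.
  intros. unfold tr. rewrite H1. pose proof (okd_neq k a b H H0).
  destruct (Z.eqb_spec (b mod (k+1)) (a mod (k+1))); [contradiction|].
  rewrite Z.eqb_refl. reflexivity.
Qed.

Lemma tr_o : forall k a b j, j mod (k+1) <> a mod (k+1) -> j mod (k+1) <> b mod (k+1) -> tr k a b j = j.
Proof.
  intros. unfold tr. destruct (Z.eqb_spec (j mod (k+1)) (a mod (k+1))); [contradiction|].
  destruct (Z.eqb_spec (j mod (k+1)) (b mod (k+1))); [contradiction|]. reflexivity.
Qed.

Lemma tr_a : forall k a b, tr k a b a = b.
Proof. intros. rewrite tr_a_gen; [lia|reflexivity]. Qed.

Lemma tr_b : forall k a b, 1 <= k -> okd k a b -> tr k a b b = a.
Proof. intros. rewrite tr_b_gen; auto; lia. Qed.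

Lemma tr_inv : forall k a b j, 1 <= k -> okd k a b -> tr k a b (tr k a b j) = j.
Proof.
  intros k a b j Hk Hd. pose proof (okd_neq k a b Hk Hd).
  destruct (Z.eq_dec (j mod (k+1)) (a mod (k+1))) as [E|E].
  - rewrite (tr_a_gen _ _ _ _ E). rewrite tr_b_gen; auto. lia.
    apply modeq_shift; auto; lia.
  - destruct (Z.eq_dec (j mod (k+1)) (b mod (k+1))) as [F|F].
    + rewrite (tr_b_gen _ _ _ _ Hk Hd F). rewrite tr_a_gen. lia.
      replace (j - (b - a)) with (j + (a - b)) by ring. apply modeq_shift; auto; lia.
    + rewrite (tr_o _ _ _ _ E F). rewrite tr_o; auto.
Qed.

Lemma tr_per : forall k a b j, tr k a b (j + (k+1)) = tr k a b j + (k+1).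
Proof.
  intros. unfold tr. replace (j + (k+1)) with (j + 1 * (k+1)) by ring. rewrite mod_trans.
  destruct (_ =? _); [lia|]. destruct (_ =? _); lia.
Qed.

Lemma tr_congr : forall k a b a' b', a mod (k+1) = a' mod (k+1) -> b mod (k+1) = b' mod (k+1) ->
  b - a = b' - a' -> forall j, tr k a b j = tr k a' b' j.
Proof. intros. unfold tr. rewrite H, H0, H1. reflexivity. Qed.

Definition per k (u : Z -> Z) := forall i, u (i + (k+1)) = u i + (k+1).
Definition inj (u : Z -> Z) := forall x y, u x = u y -> x = y.

Lemma per_mul : forall k u, per k u -> forall m i, u (i + m * (k+1)) = u i + m * (k+1).
Proof.
  intros k u P m. induction m using Z.peano_ind; intros i.
  - rewrite !Z.mul_0_l, !Z.add_0_r. reflexivity.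
  - replace (i + Z.succ m * (k+1)) with ((i + m*(k+1)) + (k+1)) by ring.
    rewrite P, IHm. ring.
  - pose proof (P (i + Z.pred m * (k+1))) as H1.
    replace (i + Z.pred m * (k + 1) + (k + 1)) with (i + m * (k+1)) in H1 by (unfold Z.pred; ring).
    rewrite IHm in H1. unfold Z.pred in *. lia.
Qed.

Lemma per_tr : forall k a b u, per k u -> per k (fun j => u (tr k a b j)).
Proof. unfold per. intros. rewrite tr_per. apply H. Qed.

Lemma inj_tr : forall k a b u, 1 <= k -> okd k a b -> inj u -> inj (fun j => u (tr k a b j)).
Proof.
  unfold inj. intros. apply H1 in H2. rewrite <- (tr_inv k a b x), <- (tr_inv k a b y); auto.
  rewrite H2; auto.
Qed.

Lemma umod_neq : forall k u p q, 1 <= k -> per k u -> inj u -> p mod (k+1) <> q mod (k+1) ->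
  (u q - u p) mod (k+1) <> 0.
Proof.
  intros k u p q Hk P I H E. apply H.
  pose proof (Z.div_mod (u q - u p) (k+1) ltac:(lia)). rewrite E in H0.
  assert (u q = u (p + ((u q - u p)/(k+1)) * (k+1))).
  { rewrite per_mul; auto. lia. }
  apply I in H1. rewrite H1. rewrite mod_trans. reflexivity.
Qed.

Fixpoint sumZ (f : Z -> Z) (m : Z) (c : nat) : Z :=
  match c with O => 0 | S c' => f m + sumZ f (m+1) c' end.

Lemma sumZ_last : forall f c m, sumZ f m (S c) = sumZ f m c + f (m + Z.of_nat c).
Proof.
  induction c; intros m; simpl.
  - replace (m+0) with m by lia. lia.
  - simpl in IHc. rewrite IHc. replace (m + 1 + Z.of_nat c) with (m + Z.pos (Pos.of_succ_nat c)) by lia. ring.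
Qed.

Lemma sumZ_ext : forall f g c m, (forall j, m <= j < m + Z.of_nat c -> f j = g j) -> sumZ f m c = sumZ g m c.
Proof.
  induction c; intros m H; simpl; auto.
  rewrite H by lia. rewrite (IHc (m+1)); auto. intros; apply H; lia.
Qed.

Lemma sumZ_split : forall f c1 c2 m, sumZ f m (c1 + c2) = sumZ f m c1 + sumZ f (m + Z.of_nat c1) c2.
Proof.
  induction c1; intros c2 m; simpl. rewrite Z.add_0_r. ring.
  rewrite IHc1. replace (m + 1 + Z.of_nat c1) with (m + Z.pos (Pos.of_succ_nat c1)) by lia. ring.
Qed.

Lemma sumZ_nonneg : forall f c m, (forall j, m <= j < m + Z.of_nat c -> 0 <= f j) -> 0 <= sumZ f m c.
Proof.
  induction c; intros m H; simpl. lia.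
  assert (0 <= f m) by (apply H; lia). assert (0 <= sumZ f (m+1) c) by (apply IHc; intros; apply H; lia). lia.
Qed.

Lemma sumZ_nonpos : forall f c m, (forall j, m <= j < m + Z.of_nat c -> f j <= 0) -> sumZ f m c <= 0.
Proof.
  induction c; intros m H; simpl. lia.
  assert (f m <= 0) by (apply H; lia). assert (sumZ f (m+1) c <= 0) by (apply IHc; intros; apply H; lia). lia.
Qed.

Lemma sumZ_zero : forall f c m, (forall j, m <= j < m + Z.of_nat c -> f j = 0) -> sumZ f m c = 0.
Proof.
  induction c; intros m H; simpl. lia.
  rewrite H by lia. rewrite IHc. lia. intros; apply H; lia.
Qed.

Lemma sumZ_zero_inv : forall f c m, (forall j, m <= j < m + Z.of_nat c -> 0 <= f j) -> sumZ f m c = 0 ->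
  forall j, m <= j < m + Z.of_nat c -> f j = 0.
Proof.
  induction c; intros m H E j Hj; simpl in *. lia.
  assert (0 <= f m) by (apply H; lia). assert (0 <= sumZ f (m+1) c) by (apply sumZ_nonneg; intros; apply H; lia).
  destruct (Z.eq_dec j m). subst; lia.
  apply (IHc (m+1)); try lia. intros; apply H; lia.
Qed.

Lemma fold_sumZ : forall (u : Z -> Z) c s,
  fold_right Z.add 0 (map (fun n0 : nat => u (Z.of_nat n0)) (seq s c)) = sumZ u (Z.of_nat s) c.
Proof.
  induction c; intros s; simpl; auto. rewrite IHc. rewrite Nat2Z.inj_succ. reflexivity.
Qed.

Lemma N_eq : forall k, 1 <= k -> Z.to_nat (k+1) = S (Z.to_nat k).
Proof. intros. lia. Qed.

Lemma sum_shift : forall k u m, 1 <= k -> per k u -> sumZ u (m+1) (Z.to_nat (k+1)) = sumZ u m (Z.to_nat (k+1)) + (k+1).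
Proof.
  intros k u m Hk P. rewrite N_eq by auto. rewrite sumZ_last. simpl.
  rewrite Z2Nat.id by lia. replace (m + 1 + k) with (m + (k+1)) by ring. rewrite P. ring.
Qed.

Lemma sum_window : forall k u, 1 <= k -> per k u -> forall m,
  sumZ u m (Z.to_nat (k+1)) = sumZ u 1 (Z.to_nat (k+1)) + (m-1)*(k+1).
Proof.
  intros k u Hk P m. induction m using Z.peano_ind.
  - pose proof (sum_shift k u 0 Hk P). simpl in H. lia.
  - rewrite <- Z.add_1_r, sum_shift by auto. rewrite IHm. ring.
  - pose proof (sum_shift k u (Z.pred m) Hk P). replace (Z.pred m + 1) with m in H by lia. lia.
Qed.

Lemma sumZ_4 : forall f d e m, sumZ f m (S (d + S e)) = f m + sumZ f (m+1) d + f (m+1+Z.of_nat d) + sumZ f (m+2+Z.of_nat d) e.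
Proof.
  intros. simpl. rewrite sumZ_split. simpl. replace (m+1+Z.of_nat d+1) with (m+2+Z.of_nat d) by ring. ring.
Qed.

Lemma sum_swap : forall k f f' a b, 1 <= k -> okd k a b ->
  f' a = f b -> f' b = f a -> (forall j, a < j <= a + k -> j <> b -> f' j = f j) ->
  sumZ f' a (Z.to_nat (k+1)) = sumZ f a (Z.to_nat (k+1)).
Proof.
  intros k f f' a b Hk Hd Ha Hb Ho. unfold okd in Hd.
  assert (Z.to_nat (k+1) = S (Z.to_nat (b-a-1) + S (Z.to_nat (k-(b-a))))) as E by lia.
  rewrite E, !sumZ_4. rewrite Z2Nat.id by lia. replace (a+1+(b-a-1)) with b by ring.
  rewrite Ha, Hb. rewrite (sumZ_ext f' f (Z.to_nat (b-a-1))). rewrite (sumZ_ext f' f (Z.to_nat (k-(b-a)))). ring.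
  all: intros j Hj; rewrite Z2Nat.id in Hj by lia; apply Ho; lia.
Qed.

Lemma tr_other_range : forall k a b j, 1 <= k -> okd k a b -> a < j <= a + k -> j <> b -> tr k a b j = j.
Proof.
  unfold okd. intros. apply tr_o.
  - apply small_neq; lia.
  - intro E. destruct (Z_lt_le_dec j b).
    + symmetry in E. revert E. apply (small_neq (k+1) j b); lia.
    + revert E. apply (small_neq (k+1) b j); lia.
Qed.

Lemma inW_tr : forall k a b u, 1 <= k -> okd k a b -> inW k u -> inW k (fun j => u (tr k a b j)).
Proof.
  intros k a b u Hk Hd [I [S [P Sm]]]. split; [|split; [|split]].
  - apply (inj_tr k a b u Hk Hd I).
  - intros y. destruct (S y) as [x Hx]. exists (tr k a b x). rewrite tr_inv; auto.
  - apply per_tr; auto.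
  - rewrite fold_sumZ in *. simpl Z.of_nat in *.
    rewrite <- Sm. pose proof (sum_window k _ Hk (per_tr k a b u P) a).
    pose proof (sum_window k _ Hk P a).
    assert (sumZ (fun j => u (tr k a b j)) a (Z.to_nat (k+1)) = sumZ u a (Z.to_nat (k+1))).
    { apply sum_swap with b; auto. rewrite tr_a; auto. rewrite tr_b; auto.
      intros. rewrite tr_other_range; auto. }
    rewrite (fold_sumZ (fun j => u (tr k a b j))). simpl Z.of_nat. lia.
Qed.

Definition fdiv k x := Z.abs (x / (k+1)).
Definition g k (u : Z -> Z) p q := fdiv k (u q - u p).
Fixpoint T (h : Z -> Z -> Z) (lo : Z) (c : nat) : Z :=
  match c with O => 0 | S c' => sumZ (h lo) (lo+1) c' + T h (lo+1) c' end.
Definition L k u := T (g k u) 1 (Z.to_nat (k+1)).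

Lemma T_last : forall h c lo, T h lo (S c) = T h lo c + sumZ (fun p => h p (lo + Z.of_nat c)) lo c.
Proof.
  intros h c. induction c; intros lo.
  - simpl. ring.
  - change (T h lo (S (S c))) with (sumZ (h lo) (lo+1) (S c) + T h (lo+1) (S c)).
    rewrite IHc, sumZ_last. change (T h lo (S c)) with (sumZ (h lo) (lo+1) c + T h (lo+1) c).
    change (sumZ (fun p => h p (lo + Z.of_nat (S c))) lo (S c)) with
      (h lo (lo + Z.of_nat (S c)) + sumZ (fun p => h p (lo + Z.of_nat (S c))) (lo+1) c).
    rewrite Nat2Z.inj_succ. replace (lo + Z.succ (Z.of_nat c)) with (lo + 1 + Z.of_nat c) by lia. ring.
Qed.

Lemma T_ext : forall h h' c lo, (forall p q, lo <= p -> p < q -> q < lo + Z.of_nat c -> h p q = h' p q) ->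
  T h lo c = T h' lo c.
Proof.
  intros h h' c. induction c; intros lo H; simpl; auto.
  rewrite (sumZ_ext (h lo) (h' lo)). rewrite IHc. reflexivity.
  intros; apply H; lia. intros; apply H; lia.
Qed.

Lemma T_nonneg : forall h c lo, (forall p q, 0 <= h p q) -> 0 <= T h lo c.
Proof.
  intros h c. induction c; intros lo H; simpl. lia.
  pose proof (sumZ_nonneg (h lo) c (lo+1) (fun j _ => H lo j)). pose proof (IHc (lo+1) H). lia.
Qed.

Lemma T_zero : forall h c lo, (forall p q, lo <= p -> p < q -> q < lo + Z.of_nat c -> h p q = 0) -> T h lo c = 0.
Proof.
  intros h c. induction c; intros lo H; simpl; auto.
  rewrite sumZ_zero. rewrite IHc. ring. intros; apply H; lia. intros; apply H; lia.
Qed.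

Lemma fdiv_opp : forall k x, 1 <= k -> x mod (k+1) <> 0 -> fdiv k (-x) = fdiv k x + Z.sgn x.
Proof.
  intros k x Hk H. unfold fdiv. rewrite Z_div_nz_opp_full by lia.
  pose proof (Z.div_mod x (k+1) ltac:(lia)). pose proof (Z.mod_pos_bound x (k+1) ltac:(lia)).
  destruct (Z_lt_le_dec 0 x).
  - rewrite Z.sgn_pos by lia. assert (0 <= x / (k+1)) by nia. lia.
  - assert (x <> 0) by (intro; subst x; apply H; apply Z.mod_0_l; lia).
    rewrite Z.sgn_neg by lia. assert (x / (k+1) < 0) by nia. lia.
Qed.

Lemma g_sym : forall k u p q, 1 <= k -> per k u -> inj u -> p < q < p + (k+1) ->
  g k u p q = g k u q (p + (k+1)).
Proof.
  intros k u p q Hk P I H. unfold g, fdiv. rewrite P.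
  assert ((u q - u p) mod (k+1) <> 0) by (apply umod_neq; auto; intro E; symmetry in E; revert E; apply small_neq; lia).
  replace (u p + (k+1) - u q) with (1 * (k+1) + - (u q - u p)) by ring.
  rewrite Z_div_plus_full_l by lia. rewrite Z_div_nz_opp_full by lia. lia.
Qed.

Lemma T_shift : forall k u m, 1 <= k -> per k u -> inj u ->
  T (g k u) m (Z.to_nat (k+1)) = T (g k u) (m+1) (Z.to_nat (k+1)).
Proof.
  intros k u m Hk P I. rewrite N_eq by auto.
  transitivity (sumZ (g k u m) (m+1) (Z.to_nat k) + T (g k u) (m+1) (Z.to_nat k)); [reflexivity|].
  rewrite T_last. rewrite Z2Nat.id by lia.
  rewrite (sumZ_ext (g k u m) (fun p => g k u p (m + 1 + k))). ring.
  intros j Hj. rewrite Z2Nat.id in Hj by lia. rewrite g_sym; auto. f_equal; ring. lia.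
Qed.

Lemma L_any : forall k u, 1 <= k -> per k u -> inj u -> forall m, T (g k u) m (Z.to_nat (k+1)) = L k u.
Proof.
  intros k u Hk P I m. unfold L. induction m using Z.peano_ind.
  - rewrite T_shift; auto.
  - rewrite <- IHm. rewrite (T_shift k u m) by auto. rewrite Z.add_1_r. reflexivity.
  - rewrite <- IHm. rewrite (T_shift k u (Z.pred m)) by auto. f_equal. lia.
Qed.

Lemma L_nonneg : forall k u, 0 <= L k u.
Proof. intros. unfold L. apply T_nonneg. intros. unfold g, fdiv. lia. Qed.

Lemma okd_adj : forall k i, 1 <= k -> okd k i (i+1).
Proof. unfold okd. intros. lia. Qed.

Lemma L_adj : forall k u i, 1 <= k -> per k u -> inj u ->
  L k (fun j => u (tr k i (i+1) j)) = L k u + Z.sgn (u (i+1) - u i).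
Proof.
  intros k u i Hk P I.
  pose proof (okd_adj k i Hk) as Hd.
  set (u' := fun j => u (tr k i (i+1) j)).
  assert (P' : per k u') by (apply per_tr; auto).
  assert (I' : inj u') by (apply inj_tr; auto).
  rewrite <- (L_any k u' Hk P' I' i), <- (L_any k u Hk P I i).
  assert (E : Z.to_nat (k+1) = S (S (Z.to_nat (k-1)))) by lia. rewrite E.
  simpl T.
  assert (Ha : u' i = u (i+1)) by (unfold u'; rewrite tr_a; auto).
  assert (Hb : u' (i+1) = u i) by (unfold u'; rewrite tr_b; auto).
  assert (Ho : forall q, i+1+1 <= q < i+1+1+Z.of_nat (Z.to_nat (k-1)) -> u' q = u q).
  { intros q Hq. unfold u'. rewrite tr_other_range; auto; lia. }
  rewrite (sumZ_ext (g k u' i) (g k u (i+1))).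
  rewrite (sumZ_ext (g k u' (i+1)) (g k u i)).
  rewrite (T_ext (g k u') (g k u)).
  unfold g. rewrite Ha, Hb.
  replace (u i - u (i+1)) with (- (u (i+1) - u i)) by ring.
  rewrite fdiv_opp; auto. ring.
  apply umod_neq; auto. intro X; symmetry in X; revert X; apply small_neq; lia.
  - intros p q H1 H2 H3. unfold g. rewrite !Ho; auto; lia.
  - intros q Hq. unfold g. rewrite Ho, Hb; auto.
  - intros q Hq. unfold g. rewrite Ho, Ha; auto.
Qed.

Lemma gen_tr : forall k i j, gen k i j = tr k i (i+1) j.
Proof. intros. unfold gen, tr. replace (i+1-i) with 1 by ring. reflexivity. Qed.

Lemma fold_comp : forall k (w : list Z) (h : Z -> Z) (j : Z),
  fold_right (fun (i : Z) (f : Z -> Z) => fun j => gen k i (f j)) h w j =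
  fold_right (fun (i : Z) (f : Z -> Z) => fun j => gen k i (f j)) (fun x => x) w (h j).
Proof. induction w; intros; simpl; auto. rewrite IHw. reflexivity. Qed.

Lemma wp_app : forall k w i, word_prod k (w ++ [i]) = fun j => word_prod k w (tr k i (i+1) j).
Proof.
  intros. apply functional_extensionality. intros j. unfold word_prod. rewrite fold_right_app.
  rewrite fold_comp. simpl. rewrite gen_tr. reflexivity.
Qed.

Lemma wp_per_inj : forall k w, 1 <= k -> per k (word_prod k w) /\ inj (word_prod k w).
Proof.
  intros k w Hk. induction w as [|i w [P I]]; simpl.
  - split; intro; intros; auto.
  - split.
    + intro j. rewrite !gen_tr. rewrite P. apply tr_per.
    + intros x y H. rewrite !gen_tr in H. apply I.
      rewrite <- (tr_inv k i (i+1) (word_prod k w x)), <- (tr_inv k i (i+1) (word_prod k w y)); auto using okd_adj.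
      unfold word_prod in *. rewrite H. reflexivity.
Qed.

Lemma L_id : forall k, 1 <= k -> L k (fun j => j) = 0.
Proof.
  intros. unfold L. apply T_zero. intros p q H1 H2 H3. unfold g, fdiv. rewrite Z.div_small; lia.
Qed.

Lemma L_word : forall k w, 1 <= k -> L k (word_prod k w) <= Z.of_nat (length w).
Proof.
  intros k w Hk. induction w using rev_ind.
  - simpl. unfold word_prod. simpl. rewrite L_id; lia.
  - rewrite wp_app. destruct (wp_per_inj k w Hk) as [P I]. rewrite L_adj; auto.
    rewrite length_app. simpl length. pose proof (Z.sgn_spec (word_prod k w (x+1) - word_prod k w x)). rewrite Nat2Z.inj_add. simpl Z.of_nat. destruct H as [[_ E]|[[_ E]|[_ E]]]; rewrite E; lia.
Qed.

Lemma incr_ge : forall (u : Z -> Z), (forall i, u i < u (i+1)) -> forall (d : nat) x, u x + Z.of_nat d <= u (x + Z.of_nat d).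
Proof.
  intros u H d. induction d; intros x. simpl. replace (x+0) with x by lia; lia.
  rewrite Nat2Z.inj_succ. specialize (IHd x). specialize (H (x + Z.of_nat d)).
  replace (x + Z.succ (Z.of_nat d)) with (x + Z.of_nat d + 1) by lia. lia.
Qed.

Lemma incr_consec : forall k u, 1 <= k -> per k u -> (forall i, u i < u (i+1)) ->
  forall j, 1 <= j <= k+1 -> u j = u 1 + (j - 1).
Proof.
  intros k u Hk P H j Hj.
  pose proof (incr_ge u H (Z.to_nat (j-1)) 1). rewrite Z2Nat.id in H0 by lia.
  pose proof (incr_ge u H (Z.to_nat (k+2-j)) j). rewrite Z2Nat.id in H1 by lia.
  replace (j + (k+2-j)) with (1 + (k+1)) in H1 by ring. rewrite P in H1.
  replace (1 + (j-1)) with j in H0 by ring. lia.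
Qed.

Lemma incr_L0 : forall k u, 1 <= k -> per k u -> (forall i, u i < u (i+1)) -> L k u = 0.
Proof.
  intros. unfold L. apply T_zero. intros p q H2 H3 H4. unfold g, fdiv.
  rewrite (incr_consec k u H H0 H1 p), (incr_consec k u H H0 H1 q) by lia.
  rewrite Z.div_small; lia.
Qed.

Lemma incr_all : forall k u, 1 <= k -> per k u -> (forall i, 0 <= i <= k -> u i < u (i+1)) -> forall i, u i < u (i+1).
Proof.
  intros k u Hk P H i.
  pose proof (Z.div_mod i (k+1) ltac:(lia)). pose proof (Z.mod_pos_bound i (k+1) ltac:(lia)).
  rewrite H0. replace ((k+1) * (i/(k+1)) + i mod (k+1)) with (i mod (k+1) + (i/(k+1))*(k+1)) by ring.
  replace (i mod (k+1) + (i/(k+1))*(k+1) + 1) with ((i mod (k+1) + 1) + (i/(k+1))*(k+1)) by ring.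
  rewrite !(per_mul k u P). specialize (H (i mod (k+1))). lia.
Qed.

Lemma descent : forall k u, 1 <= k -> per k u -> inj u -> 0 < L k u -> exists i, 0 <= i <= k /\ u (i+1) < u i.
Proof.
  intros k u Hk P I HL. apply NNPP. intro C.
  assert (forall i, 0 <= i <= k -> u i < u (i+1)).
  { intros i Hi. destruct (Z.lt_total (u i) (u (i+1))) as [|[E|]]; auto.
    apply I in E; lia. exfalso; apply C; exists i; auto. }
  rewrite (incr_L0 k u) in HL; auto. lia. apply (incr_all k u); auto.
Qed.

Lemma sumZ_addc : forall f c' c m, sumZ (fun j => f j + c') m c = sumZ f m c + Z.of_nat c * c'.
Proof. intros f c' c. induction c; intros m; simpl sumZ. simpl. lia. rewrite IHc. rewrite Nat2Z.inj_succ. ring. Qed.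

Lemma gauss : forall c m, 2 * sumZ (fun j => j) m c = Z.of_nat c * (2*m + Z.of_nat c - 1).
Proof. induction c; intros m; simpl sumZ. lia. rewrite Z.mul_add_distr_l, IHc. rewrite Nat2Z.inj_succ. nia. Qed.

Lemma L0_id : forall k u, 1 <= k -> inW k u -> L k u = 0 -> u = fun j => j.
Proof.
  intros k u Hk [I [S [P Sm]]] HL.
  assert (H : forall i, u i < u (i+1)).
  { intros i. destruct (Z.lt_total (u i) (u (i+1))) as [|[E|E]]; auto.
    apply I in E; lia. pose proof (L_adj k u i Hk P I). rewrite HL, Z.sgn_neg in H by lia.
    pose proof (L_nonneg k (fun j => u (tr k i (i+1) j))). lia. }
  pose proof (incr_consec k u Hk P H) as C.
  rewrite fold_sumZ in Sm. simpl Z.of_nat in Sm.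
  rewrite (sumZ_ext u (fun j => j + (u 1 - 1))) in Sm.
  2:{ intros j Hj. rewrite C; lia. }
  rewrite sumZ_addc in Sm. pose proof (gauss (Z.to_nat (k+1)) 1). rewrite Z2Nat.id in * by lia.
  assert ((k+2)*(k+1)/2 = sumZ (fun j => j) 1 (Z.to_nat (k+1))).
  { replace ((k+2)*(k+1)) with (sumZ (fun j => j) 1 (Z.to_nat (k+1)) * 2) by lia. apply Z.div_mul. lia. }
  assert (u 1 = 1) by nia.
  apply functional_extensionality. intros j.
  pose proof (Z.div_mod (j-1) (k+1) ltac:(lia)). pose proof (Z.mod_pos_bound (j-1) (k+1) ltac:(lia)).
  replace j with (((j-1) mod (k+1) + 1) + ((j-1)/(k+1))*(k+1)) by lia.
  rewrite per_mul; auto. rewrite C; lia.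
Qed.

Lemma word_exists : forall k (N : nat) u, 1 <= k -> inW k u -> Z.to_nat (L k u) = N ->
  exists w, valid_word k w /\ length w = N /\ word_prod k w = u.
Proof.
  intros k N. induction N; intros u Hk Hu HN.
  - exists []. split. constructor. split. auto. pose proof (L_nonneg k u).
    rewrite (L0_id k u Hk Hu) by lia. reflexivity.
  - destruct Hu as [I [S [P Sm]]] eqn:Hu'.
    destruct (descent k u Hk P I) as [i [Hi Hdes]]. lia.
    set (v := fun j => u (tr k i (i+1) j)).
    assert (Hv : inW k v) by (apply inW_tr; auto using okd_adj).
    assert (Z.to_nat (L k v) = N).
    { unfold v. rewrite L_adj, Z.sgn_neg; auto; lia. }
    destruct (IHN v Hk Hv H) as [w [Vw [Lw Ew]]].
    exists (w ++ [i]). split; [|split].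
    + apply Forall_app. split; auto.
    + rewrite length_app; simpl; lia.
    + rewrite wp_app, Ew. apply functional_extensionality. intros j. unfold v. rewrite tr_inv; auto using okd_adj.
Qed.

Lemma has_len : forall k u, 1 <= k -> inW k u -> has_length k u (Z.to_nat (L k u)).
Proof.
  intros. split.
  - apply word_exists; auto.
  - intros w _ E. pose proof (L_word k w H). rewrite E in H1. lia.
Qed.

Lemma has_length_unique : forall k u n m, has_length k u n -> has_length k u m -> n = m.
Proof.
  intros k u n m [[w1 [V1 [L1 E1]]] M1] [[w2 [V2 [L2 E2]]] M2].
  specialize (M1 w2 V2 E2). specialize (M2 w1 V1 E1). lia.
Qed.

Lemma length_up_iff : forall k a b u, 1 <= k -> okd k a b -> inW k u ->
  (length_up k a b u <-> L k (fun j => u (tr k a b j)) = L k u + 1).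
Proof.
  intros k a b u Hk Hd Hu. pose proof (inW_tr k a b u Hk Hd Hu) as Hv.
  pose proof (L_nonneg k u). pose proof (L_nonneg k (fun j => u (tr k a b j))).
  split.
  - intros [n [H1 H2]]. pose proof (has_length_unique _ _ _ _ H1 (has_len k u Hk Hu)).
    pose proof (has_length_unique _ _ _ _ H2 (has_len k _ Hk Hv)). lia.
  - intros E. exists (Z.to_nat (L k u)). split. apply has_len; auto.
    replace (S (Z.to_nat (L k u))) with (Z.to_nat (L k (fun j => u (tr k a b j)))) by lia.
    apply has_len; auto.
Qed.

Lemma modsh : forall n j x y, 0 < n -> j mod n = x mod n -> (j + y) mod n = (x + y) mod n.
Proof.
  intros. destruct (modeq_ex n j x H H0) as [m ->].
  replace (x + m * n + y) with ((x + y) + m * n) by ring. apply mod_trans.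
Qed.

Lemma tr_decomp : forall k a b j, 1 <= k -> 2 <= b - a <= k ->
  tr k a b j = tr k a (a+1) (tr k (a+1) b (tr k a (a+1) j)).
Proof.
  intros k a b j Hk Hab.
  assert (Hd1 : okd k a (a+1)) by (unfold okd; lia).
  assert (Hd2 : okd k (a+1) b) by (unfold okd; lia).
  assert (Hd : okd k a b) by (unfold okd; lia).
  assert (N1 : (a+1) mod (k+1) <> a mod (k+1)) by (apply small_neq; lia).
  assert (N2 : b mod (k+1) <> a mod (k+1)) by (apply small_neq; lia).
  assert (N3 : b mod (k+1) <> (a+1) mod (k+1)) by (apply small_neq; lia).
  assert (Hn : 0 < k+1) by lia.
  destruct (Z.eq_dec (j mod (k+1)) (a mod (k+1))) as [E1|E1].
  - rewrite (tr_a_gen k a (a+1) j E1).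
    assert (F1 : (j + (a+1-a)) mod (k+1) = (a+1) mod (k+1)) by (rewrite (modsh _ _ _ _ Hn E1); f_equal; ring).
    rewrite (tr_a_gen k (a+1) b _ F1).
    assert (F2 : (j + (a+1-a) + (b - (a+1))) mod (k+1) = b mod (k+1)) by (rewrite (modsh _ _ _ _ Hn F1); f_equal; ring).
    rewrite (tr_o k a (a+1) (j + (a+1-a) + (b - (a+1)))); [| rewrite F2; auto | rewrite F2; auto].
    rewrite tr_a_gen; auto. ring.
  - destruct (Z.eq_dec (j mod (k+1)) ((a+1) mod (k+1))) as [E2|E2].
    + rewrite (tr_b_gen k a (a+1) j Hk Hd1 E2).
      assert (F1 : (j - (a+1-a)) mod (k+1) = a mod (k+1)).
      { replace (j - (a+1-a)) with (j + -1) by ring. rewrite (modsh _ _ _ _ Hn E2). f_equal; ring. }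
      rewrite (tr_o k (a+1) b (j - (a+1-a))); [| rewrite F1; auto | rewrite F1; auto].
      rewrite (tr_a_gen k a (a+1) (j - (a+1-a)) F1). rewrite (tr_o k a b j); auto. ring.
      rewrite E2; auto.
    + destruct (Z.eq_dec (j mod (k+1)) (b mod (k+1))) as [E3|E3].
      * rewrite (tr_o k a (a+1) j E1 E2).
        rewrite (tr_b_gen k (a+1) b j Hk Hd2 E3).
        assert (F1 : (j - (b - (a+1))) mod (k+1) = (a+1) mod (k+1)).
        { replace (j - (b - (a+1))) with (j + (a+1-b)) by ring. rewrite (modsh _ _ _ _ Hn E3). f_equal; ring. }
        rewrite (tr_b_gen k a (a+1) _ Hk Hd1 F1). rewrite tr_b_gen; auto. ring.
      * rewrite (tr_o k a (a+1) j E1 E2). rewrite (tr_o k (a+1) b j E2 E3).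
        rewrite (tr_o k a (a+1) j E1 E2). rewrite tr_o; auto.
Qed.

Definition psi (k : Z) (u : Z -> Z) a b := sumZ (fun i => Z.sgn (u b - u i) + Z.sgn (u i - u a)) (a+1) (Z.to_nat (b-a-1)).

Lemma L_formula : forall (d : nat) k u a, 1 <= k -> per k u -> inj u -> 1 <= Z.of_nat d <= k ->
  L k (fun j => u (tr k a (a + Z.of_nat d) j)) = L k u + Z.sgn (u (a + Z.of_nat d) - u a) + psi k u a (a + Z.of_nat d).
Proof.
  induction d; intros k u a Hk P I Hd. simpl in Hd; lia.
  destruct d.
  - simpl Z.of_nat. rewrite L_adj; auto. unfold psi. replace (Z.to_nat (a+1-a-1)) with O by lia. simpl. ring.
  - set (b := a + Z.of_nat (S (S d))).
    assert (Hb : b = (a+1) + Z.of_nat (S d)) by (unfold b; lia).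
    assert (Hd1 : okd k a (a+1)) by (unfold okd; lia).
    set (v := fun j => u (tr k a (a+1) j)).
    assert (Pv : per k v) by (apply per_tr; auto).
    assert (Iv : inj v) by (apply inj_tr; auto).
    set (w := fun j => v (tr k (a+1) b j)).
    assert (Pw : per k w) by (apply per_tr; auto).
    assert (Iw : inj w) by (unfold w; apply inj_tr; auto; unfold okd; lia).
    assert (E : (fun j => u (tr k a b j)) = (fun j => w (tr k a (a+1) j))).
    { apply functional_extensionality; intros j. unfold w, v. rewrite <- tr_decomp; auto. lia. }
    rewrite E, L_adj; auto.
    unfold w. rewrite Hb. rewrite IHd; auto; try lia. rewrite <- Hb.
    unfold v. rewrite L_adj; auto. fold v.
    assert (Ov : forall i, a+1 < i <= a + k -> v i = u i).
    { intros i Hi. unfold v. rewrite tr_other_range; auto; lia. }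
    assert (Va : v a = u (a+1)) by (unfold v; rewrite tr_a; auto).
    assert (Va1 : v (a+1) = u a) by (unfold v; rewrite tr_b; auto).
    assert (Vb : v b = u b) by (apply Ov; unfold b; lia).
    rewrite (tr_a k (a+1) b).
    rewrite (tr_o k (a+1) b a) by (intro X; symmetry in X; revert X; apply small_neq; lia).
    change (u (tr k a (a+1) b)) with (v b). change (u (tr k a (a+1) (a+1))) with (v (a+1)).
    change (u (tr k a (a+1) a)) with (v a). rewrite Vb, Va1, Va.
    unfold psi. replace (Z.to_nat (b - a - 1)) with (S (Z.to_nat (b - (a+1) - 1))) by (unfold b in *; lia).
    simpl sumZ. rewrite Vb, Va1.
    rewrite (sumZ_ext (fun i => Z.sgn (u b - v i) + Z.sgn (v i - u a)) (fun i => Z.sgn (u b - u i) + Z.sgn (u i - u a))).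
    ring.
    intros j Hj. rewrite Ov. reflexivity. rewrite Z2Nat.id in Hj; unfold b in *; lia.
Qed.

Definition Btw (u : Z -> Z) a b := forall i, a < i < b -> u i < u a \/ u b < u i.

Lemma crit : forall k u a b, 1 <= k -> okd k a b -> per k u -> inj u ->
  (L k (fun j => u (tr k a b j)) = L k u + 1 <-> u a < u b /\ Btw u a b).
Proof.
  intros k u a b Hk Hd P I. unfold okd in Hd.
  pose proof (L_formula (Z.to_nat (b-a)) k u a Hk P I) as F.
  rewrite Z2Nat.id in F by lia. replace (a + (b-a)) with b in F by ring. rewrite F by lia. clear F.
  unfold psi.
  set (Fn := fun i => Z.sgn (u b - u i) + Z.sgn (u i - u a)).
  assert (Hne : forall i, a < i < b -> u i <> u a /\ u i <> u b).
  { intros i Hi. split; intro X; apply I in X; lia. }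
  assert (Hab : u a <> u b) by (intro X; apply I in X; lia).
  destruct (Z_lt_le_dec (u a) (u b)) as [Lt|Ge].
  - rewrite Z.sgn_pos by lia.
    assert (Nn : forall j, a+1 <= j < a+1+Z.of_nat (Z.to_nat (b-a-1)) -> 0 <= Fn j).
    { intros j Hj. rewrite Z2Nat.id in Hj by lia. destruct (Hne j ltac:(lia)).
      unfold Fn. pose proof (Z.sgn_spec (u b - u j)). pose proof (Z.sgn_spec (u j - u a)). lia. }
    split.
    + intros E. split; auto. intros i Hi.
      assert (Z0 : sumZ Fn (a+1) (Z.to_nat (b-a-1)) = 0) by lia.
      pose proof (sumZ_zero_inv Fn _ _ Nn Z0 i). rewrite Z2Nat.id in H by lia.
      specialize (H ltac:(lia)). destruct (Hne i Hi). unfold Fn in H.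
      pose proof (Z.sgn_spec (u b - u i)). pose proof (Z.sgn_spec (u i - u a)). lia.
    + intros [_ B]. rewrite sumZ_zero. ring. intros j Hj. rewrite Z2Nat.id in Hj by lia.
      destruct (Hne j ltac:(lia)). specialize (B j ltac:(lia)). unfold Fn.
      pose proof (Z.sgn_spec (u b - u j)). pose proof (Z.sgn_spec (u j - u a)). lia.
  - rewrite Z.sgn_neg by lia.
    assert (Np : forall j, a+1 <= j < a+1+Z.of_nat (Z.to_nat (b-a-1)) -> Fn j <= 0).
    { intros j Hj. rewrite Z2Nat.id in Hj by lia. destruct (Hne j ltac:(lia)).
      unfold Fn. pose proof (Z.sgn_spec (u b - u j)). pose proof (Z.sgn_spec (u j - u a)). lia. }
    pose proof (sumZ_nonpos Fn _ _ Np). split; intros; lia.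
Qed.

Lemma top_S : forall k a b u, 1 <= k -> okd k a b -> inW k u -> u a <= 0 < u b -> Btw u a b ->
  top k a b (Some u) = Some (fun j => u (tr k a b j)).
Proof.
  intros k a b u Hk Hd Hu Hs HB. unfold top.
  destruct (excluded_middle_informative (top_cond k a b u)) as [_|n]; auto.
  exfalso; apply n. split; [|lia]. destruct Hu as [I [S [P Sm]]] eqn:E.
  apply length_up_iff; auto. apply crit; auto. split; auto; lia.
Qed.

Lemma top_N : forall k a b u, 1 <= k -> okd k a b -> inW k u -> ~ (u a <= 0 < u b /\ Btw u a b) ->
  top k a b (Some u) = None.
Proof.
  intros k a b u Hk Hd Hu C. unfold top.
  destruct (excluded_middle_informative (top_cond k a b u)) as [[Hl Hs]|n]; auto.
  exfalso; apply C. split; auto. destruct Hu as [I [S [P Sm]]] eqn:E.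
  apply length_up_iff in Hl; auto. apply crit in Hl; auto. tauto.
Qed.

Definition Cond (u : Z -> Z) a b := u a <= 0 < u b /\ Btw u a b.

Lemma topS : forall k a b u, 1 <= k -> okd k a b -> inW k u -> Cond u a b ->
  top k a b (Some u) = Some (fun j => u (tr k a b j)).
Proof. intros k a b u H1 H2 H3 [H4 H5]. apply top_S; auto. Qed.
Lemma topN : forall k a b u, 1 <= k -> okd k a b -> inW k u -> ~ Cond u a b ->
  top k a b (Some u) = None.
Proof. intros. apply top_N; auto. Qed.
Lemma topNone : forall k a b, top k a b None = None.
Proof. reflexivity. Qed.

Lemma near_neq : forall k x y, 1 <= k -> 0 < Z.abs (x - y) < k + 1 -> x mod (k+1) <> y mod (k+1).
Proof.
  intros. destruct (Z_lt_le_dec x y).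
  - intro E; symmetry in E; revert E; apply small_neq; lia.
  - apply small_neq; lia.
Qed.

Ltac nm := apply near_neq; [assumption|lia].

Lemma near_neq_m : forall k x y m, 1 <= k -> 0 < Z.abs (x - m*(k+1) - y) < k + 1 -> x mod (k+1) <> y mod (k+1).
Proof.
  intros. replace x with ((x - m*(k+1)) + m * (k+1)) by ring. rewrite mod_trans. apply near_neq; auto.
Qed.

Ltac nm2 m := apply (near_neq_m _ _ _ m); [assumption|lia].
Ltac nmm := first [nm | nm2 1 | nm2 (-1) | nm2 2 | nm2 (-2)].

Lemma trA : forall k a b j, 1 <= k -> okd k a b -> j = a -> tr k a b j = b.
Proof. intros; subst; apply tr_a. Qed.
Lemma trB : forall k a b j, 1 <= k -> okd k a b -> j = b -> tr k a b j = a.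
Proof. intros; subst; apply tr_b; auto. Qed.

Lemma rel_F : forall k u a b c, 1 <= k -> inW k u -> okd k a b -> okd k b c -> a < b -> b < c -> c - a < k + 1 ->
  top k b c (top k a b (top k b c (Some u))) = None /\
  top k a b (top k b c (top k a b (Some u))) = None.
Proof.
  intros k u a b c Hk Hu Hab Hbc H1 H2 H3.
  assert (Hac : a mod (k+1) <> c mod (k+1)) by nm.
  assert (Hac' : a mod (k+1) <> b mod (k+1)) by nm.
  split.
  - destruct (classic (Cond u b c)) as [C1|C1]; [rewrite topS by auto | rewrite topN by auto; reflexivity].
    set (v := fun j => u (tr k b c j)).
    assert (Hv : inW k v) by (apply inW_tr; auto).
    destruct (classic (Cond v a b)) as [C2|C2]; [rewrite topS by auto | rewrite topN by auto; reflexivity].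
    apply topN; auto. apply inW_tr; auto.
    intros [[X Y] _]. destruct C1 as [[Z1 Z2] _]. cbv beta in Y. unfold v in Y.
    rewrite (tr_o k a b c) in Y by (try nm; auto). rewrite tr_b in Y; auto. lia.
  - destruct (classic (Cond u a b)) as [C1|C1]; [rewrite topS by auto | rewrite topN by auto; reflexivity].
    set (v := fun j => u (tr k a b j)).
    assert (Hv : inW k v) by (apply inW_tr; auto).
    destruct (classic (Cond v b c)) as [C2|C2]; [rewrite topS by auto | rewrite topN by auto; reflexivity].
    apply topN; auto. apply inW_tr; auto.
    intros [[X Y] _]. destruct C1 as [[Z1 Z2] _]. cbv beta in X. unfold v in X.
    rewrite (tr_o k b c a) in X by (try nm; auto). rewrite tr_a in X. lia.
Qed.

Lemma inW_per : forall k u, inW k u -> per k u.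
Proof. intros k u [_ [_ [P _]]]. exact P. Qed.
Lemma inW_inj : forall k u, inW k u -> inj u.
Proof. intros k u [I _]. exact I. Qed.

Lemma rel_B2 : forall k u a b c d, 1 <= k -> inW k u -> okd k a b -> okd k c d ->
  ((res k a = res k c /\ b <= d) \/ (res k b = res k d /\ c <= a)) ->
  top k c d (top k a b (Some u)) = None.
Proof.
  intros k u a b c d Hk Hu Hab Hcd H. unfold res in H.
  destruct (classic (Cond u a b)) as [C1|C1]; [rewrite topS by auto | rewrite topN by auto; reflexivity].
  set (v := fun j => u (tr k a b j)).
  assert (Hv : inW k v) by (apply inW_tr; auto).
  apply topN; auto. intros [[X Y] _]. destruct C1 as [[Z1 Z2] _].
  pose proof (per_mul k v (inW_per k v Hv)) as PM. unfold okd in *.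
  destruct H as [[E F]|[E F]].
  - symmetry in E. destruct (modeq_ex (k+1) c a ltac:(lia) E) as [m Hm].
    assert (0 <= m) by nia. rewrite Hm, PM in X. unfold v in X. rewrite tr_a in X. nia.
  - symmetry in E. destruct (modeq_ex (k+1) d b ltac:(lia) E) as [m Hm].
    assert (m <= 0) by nia. rewrite Hm, PM in Y. unfold v in Y. rewrite tr_b in Y by (auto; unfold okd; lia). nia.
Qed.

Lemma W0_order : forall k u, inW0 k u -> forall i j, 1 <= u i -> u i < u j -> u j <= k+1 -> i < j.
Proof.
  intros k u [[I [S [P Sm]]] W] i j H1 H2 H3.
  assert (forall (d : nat) i j, 1 <= u i -> u j = u i + Z.of_nat d + 1 -> u j <= k+1 -> i < j).
  { induction d; intros i' j' G1 G2 G3.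
    - apply W; auto. simpl in G2; lia.
    - destruct (S (u i' + Z.of_nat d + 1)) as [m Hm].
      assert (i' < m) by (apply IHd; auto; lia).
      assert (m < j') by (apply W; lia). lia. }
  apply (H (Z.to_nat (u j - u i - 1))); auto. lia.
Qed.

Lemma rel_B1 : forall k u a b c d, 1 <= k -> inW0 k u -> okd k a b -> okd k c d ->
  ((a < c /\ c < b /\ b < d) \/ (b = c /\ d - a > k + 1)) ->
  top k c d (top k a b (Some u)) = None /\ top k a b (top k c d (Some u)) = None.
Proof.
  intros k u a b c d Hk Hu0 Hab Hcd H.
  assert (Hu : inW k u) by apply Hu0.
  pose proof (W0_order k u Hu0) as WO. pose proof (inW_per k u Hu) as Pu.
  unfold okd in Hab, Hcd.
  split.
  - destruct (classic (Cond u a b)) as [C1|C1]; [rewrite topS by auto | rewrite topN by auto; reflexivity].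
    set (v := fun j => u (tr k a b j)).
    assert (Hv : inW k v) by (apply inW_tr; auto).
    apply topN; auto. intros [[X Y] B]. destruct C1 as [[Z1 Z2] B1].
    destruct H as [[G1 [G2 G3]]|[G1 G2]].
    + assert (vc : v c = u c) by (unfold v; rewrite tr_o; auto; nm).
      assert (vb : v b = u a) by (unfold v; rewrite tr_b; auto).
      specialize (B1 c ltac:(lia)). specialize (B b ltac:(lia)). lia.
    + subst c.
      assert (vd : v d = u d) by (unfold v; rewrite tr_o; auto; nmm).
      assert (vb : v b = u a) by (unfold v; rewrite tr_b; auto).
      assert (va : v (a + (k+1)) = u b + (k+1)) by (rewrite (inW_per k v Hv); unfold v; rewrite tr_a; auto).
      specialize (B (a + (k+1)) ltac:(lia)). specialize (B1 (d - (k+1)) ltac:(lia)).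
      assert (u (d - (k+1)) = u d - (k+1)) by (pose proof (Pu (d-(k+1))) as PP; replace (d - (k+1) + (k+1)) with d in PP by ring; lia).
      assert (d < a + (k+1)) by (apply WO; rewrite ?Pu; lia). lia.
  - destruct (classic (Cond u c d)) as [C1|C1]; [rewrite topS by auto | rewrite topN by auto; reflexivity].
    set (v := fun j => u (tr k c d j)).
    assert (Hv : inW k v) by (apply inW_tr; auto).
    apply topN; auto. intros [[X Y] B]. destruct C1 as [[Z1 Z2] B1].
    destruct H as [[G1 [G2 G3]]|[G1 G2]].
    + assert (vc : v c = u d) by (unfold v; rewrite tr_a; auto).
      assert (vb : v b = u b) by (unfold v; rewrite tr_o; auto; nm).
      specialize (B c ltac:(lia)). specialize (B1 b ltac:(lia)). lia.
    + subst c.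
      assert (va : v a = u a) by (unfold v; rewrite tr_o; auto; nmm).
      assert (vb : v b = u d) by (unfold v; rewrite tr_a; auto).
      assert (vd : v (d - (k+1)) = u b - (k+1)).
      { assert (v d = u b) by (unfold v; rewrite tr_b; auto).
        pose proof (inW_per k v Hv (d-(k+1))) as PP; replace (d - (k+1) + (k+1)) with d in PP by ring; lia. }
      specialize (B (d - (k+1)) ltac:(lia)). specialize (B1 (a + (k+1)) ltac:(lia)).
      rewrite Pu in B1.
      assert (d < a + (k+1)) by (apply WO; rewrite ?Pu; lia). lia.
Qed.

Lemma Btw_shift : forall k v x y m, per k v -> Btw v x y -> Btw v (x + m*(k+1)) (y + m*(k+1)).
Proof.
  intros k v x y m P B i Hi. specialize (B (i - m*(k+1)) ltac:(lia)).
  pose proof (per_mul k v P m (i - m*(k+1))). replace (i - m*(k+1) + m*(k+1)) with i in H by ring.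
  rewrite !(per_mul k v P). lia.
Qed.

Lemma per1 : forall k v x, per k v -> v (x - (k+1)) = v x - (k+1).
Proof. intros. pose proof (H (x - (k+1))). replace (x - (k+1) + (k+1)) with x in H0 by ring. lia. Qed.

Lemma rel_C1 : forall k u a b d, 1 <= k -> inW k u -> okd k a b -> okd k b d -> okd k (b - k - 1) a ->
  a < b -> b < d -> d - a = k + 1 ->
  top k b d (top k a b (Some u)) = top k (b - k - 1) a (top k a b (Some u)).
Proof.
  intros k u a b d Hk Hu Hab Hbd Hba H1 H2 H3.
  destruct (classic (Cond u a b)) as [C1|C1]; [rewrite topS by auto | rewrite topN by auto; reflexivity].
  set (v := fun j => u (tr k a b j)).
  assert (Hv : inW k v) by (apply inW_tr; auto).
  pose proof (inW_per k v Hv) as Pv.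
  assert (Etr : forall j, tr k b d j = tr k (b-k-1) a j).
  { apply tr_congr.
    - replace (b - k - 1) with (b + (-1)*(k+1)) by ring. rewrite mod_trans. auto.
    - replace d with (a + 1*(k+1)) by lia. rewrite mod_trans. auto.
    - lia. }
  assert (vb : v b = u a) by (unfold v; rewrite tr_b; auto).
  assert (va : v a = u b) by (unfold v; rewrite tr_a; auto).
  assert (vd : v d = u b + (k+1)) by (replace d with (a + (k+1)) by lia; rewrite Pv; lia).
  assert (vbn : v (b - k - 1) = u a - (k+1)) by (replace (b-k-1) with (b - (k+1)) by ring; rewrite per1; auto; lia).
  destruct C1 as [[Z1 Z2] B1].
  assert (Eq : Cond v b d <-> Cond v (b-k-1) a).
  { unfold Cond. rewrite vb, vd, vbn, va. split; intros [S B]; split; try lia.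
    - replace (b-k-1) with (b + (-1)*(k+1)) by ring. replace a with (d + (-1)*(k+1)) by lia.
      apply Btw_shift; auto.
    - replace b with ((b-k-1) + 1*(k+1)) by ring. replace d with (a + 1*(k+1)) by lia.
      apply Btw_shift; auto. }
  destruct (classic (Cond v b d)) as [C2|C2].
  - rewrite topS by auto. rewrite topS by (auto; apply Eq; auto). f_equal.
    apply functional_extensionality; intros j. rewrite Etr. reflexivity.
  - rewrite topN by auto. rewrite topN; auto. rewrite <- Eq. auto.
Qed.

Lemma rel_D : forall k u a b c d, 1 <= k -> inW k u -> okd k a b -> okd k c d -> okd k (d - k - 1) c -> okd k (b - k - 1) a ->
  a < b -> b < c -> c < d -> res k b = res k c -> res k d = res k a -> (b - a) + (d - c) = k + 1 ->
  top k c d (top k a b (Some u)) = top k (b - k - 1) a (top k (d - k - 1) c (Some u)).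
Proof.
  intros k u a b c d Hk Hu Hab Hcd Hdc Hba H1 H2 H3 Rbc Rda Hs. unfold res in *.
  destruct (modeq_ex (k+1) c b ltac:(lia) (eq_sym Rbc)) as [p Hp].
  assert (p1 : 1 <= p) by nia.
  assert (Hd : d = a + (p+1)*(k+1)) by nia.
  assert (E1 : forall j, tr k (d-k-1) c j = tr k a b j).
  { apply tr_congr; [ | | lia].
    - replace (d-k-1) with (a + p*(k+1)) by lia. apply mod_trans.
    - rewrite Hp. apply mod_trans. }
  assert (E2 : forall j, tr k (b-k-1) a j = tr k c d j).
  { apply tr_congr; [ | | lia].
    - rewrite Hp. replace (b-k-1) with (b + (-1)*(k+1)) by ring. rewrite !mod_trans. auto.
    - auto. }
  set (v := fun j => u (tr k a b j)).
  assert (Hv : inW k v) by (apply inW_tr; auto).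
  pose proof (inW_per k v Hv) as Pv. pose proof (inW_per k u Hu) as Pu.
  assert (Ev : (fun j => u (tr k (d-k-1) c j)) = v).
  { apply functional_extensionality; intros j. unfold v. rewrite E1. auto. }
  assert (Ew : (fun j => v (tr k (b-k-1) a j)) = (fun j => v (tr k c d j))).
  { apply functional_extensionality; intros j. rewrite E2. auto. }
  assert (vb : v b = u a) by (unfold v; rewrite tr_b; auto).
  assert (va : v a = u b) by (unfold v; rewrite tr_a; auto).
  assert (vc : v c = u a + p*(k+1)) by (rewrite Hp, per_mul; auto; lia).
  assert (vd : v d = u b + (p+1)*(k+1)) by (rewrite Hd, per_mul; auto; lia).
  assert (vbn : v (b - k - 1) = u a - (k+1)) by (replace (b-k-1) with (b - (k+1)) by ring; rewrite per1; auto; lia).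
  assert (udn : u (d - k - 1) = u a + p*(k+1)) by (replace (d-k-1) with (a + p*(k+1)) by lia; rewrite per_mul; auto).
  assert (uc : u c = u b + p*(k+1)) by (rewrite Hp, per_mul; auto).
  assert (Bcd : Btw v c d <-> Btw v (b-k-1) a).
  { split; intro B.
    - replace (b-k-1) with (c + (-(p+1))*(k+1)) by lia. replace a with (d + (-(p+1))*(k+1)) by lia.
      apply Btw_shift; auto.
    - replace c with ((b-k-1) + (p+1)*(k+1)) by lia. replace d with (a + (p+1)*(k+1)) by lia.
      apply Btw_shift; auto. }
  assert (Bab : Btw u a b <-> Btw u (d-k-1) c).
  { split; intro B.
    - replace (d-k-1) with (a + p*(k+1)) by lia. replace c with (b + p*(k+1)) by lia.
      apply Btw_shift; auto.
    - replace a with ((d-k-1) + (-p)*(k+1)) by lia. replace b with (c + (-p)*(k+1)) by lia.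
      apply Btw_shift; auto. }
  assert (Key : (Cond u a b /\ Cond v c d) <-> (Cond u (d-k-1) c /\ Cond v (b-k-1) a)).
  { unfold Cond. rewrite vc, vd, vbn, va, udn, uc, Bcd, Bab.
    split; intros [[[X1 X2] X3] [[X4 X5] X6]]; repeat split; auto; nia. }
  destruct (classic (Cond u a b /\ Cond v c d)) as [[C1 C2]|C].
  - destruct (proj1 Key (conj C1 C2)) as [C3 C4].
    rewrite topS by auto. fold v. rewrite topS by auto.
    rewrite topS by auto. rewrite Ev. rewrite topS by auto. rewrite Ew. reflexivity.
  - transitivity (@None (Z -> Z)).
    + destruct (classic (Cond u a b)) as [C1|C1]; [rewrite topS by auto | rewrite topN by auto; reflexivity].
      fold v. apply topN; auto.
    + destruct (classic (Cond u (d-k-1) c)) as [C1|C1]; [rewrite topS by auto | rewrite topN by auto; reflexivity].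
      rewrite Ev. symmetry. apply topN; auto. intro C2. apply C. apply Key. auto.
Qed.

Lemma tr_permul : forall k x y z m, tr k x y (z + m*(k+1)) = tr k x y z + m*(k+1).
Proof. intros. apply per_mul. intro. apply tr_per. Qed.

Ltac sidem := first [assumption | (apply not_eq_sym; assumption) | nmm | (rewrite mod_trans; assumption) | (rewrite mod_trans; apply not_eq_sym; assumption)].

Lemma modeq_of : forall k z x m, z = x + m*(k+1) -> z mod (k+1) = x mod (k+1).
Proof. intros; subst; apply mod_trans. Qed.

Ltac modeq_tac := first [apply (modeq_of _ _ _ 0); lia | apply (modeq_of _ _ _ 1); lia | apply (modeq_of _ _ _ (-1)); lia
  | apply (modeq_of _ _ _ 2); lia | apply (modeq_of _ _ _ (-2)); lia].

Ltac evtr k := repeat (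
   match goal with
   | |- context [tr k ?x ?y ?x] => rewrite (tr_a k x y)
   | |- context [tr k ?x ?y ?y] => rewrite (tr_b k x y) by (auto; unfold okd in *; lia)
   | |- context [tr k ?x ?y (?z + ?m * (k+1))] => rewrite (tr_permul k x y z m)
   | |- context [tr k ?x ?y ?z] => rewrite (tr_a_gen k x y z) by modeq_tac
   | |- context [tr k ?x ?y ?z] => rewrite (tr_b_gen k x y z) by first [assumption | lia | modeq_tac]
   | |- context [tr k ?x ?y ?z] => rewrite (tr_o k x y z) by sidem
   end).

Lemma fun_A : forall k a b c d, 1 <= k -> okd k a b -> okd k c d ->
  a mod (k+1) <> b mod (k+1) -> a mod (k+1) <> c mod (k+1) -> a mod (k+1) <> d mod (k+1) ->
  b mod (k+1) <> c mod (k+1) -> b mod (k+1) <> d mod (k+1) -> c mod (k+1) <> d mod (k+1) ->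
  forall j, tr k a b (tr k c d j) = tr k c d (tr k a b j).
Proof.
  intros k a b c d Hk Hab Hcd N1 N2 N3 N4 N5 N6 j.
  destruct (Z.eq_dec (j mod (k+1)) (a mod (k+1))) as [E|Ea].
  { destruct (modeq_ex (k+1) _ _ ltac:(lia) E) as [m ->]. evtr k. reflexivity. }
  destruct (Z.eq_dec (j mod (k+1)) (b mod (k+1))) as [E|Eb].
  { destruct (modeq_ex (k+1) _ _ ltac:(lia) E) as [m ->]. evtr k. reflexivity. }
  destruct (Z.eq_dec (j mod (k+1)) (c mod (k+1))) as [E|Ec].
  { destruct (modeq_ex (k+1) _ _ ltac:(lia) E) as [m ->]. evtr k. reflexivity. }
  destruct (Z.eq_dec (j mod (k+1)) (d mod (k+1))) as [E|Ed].
  { destruct (modeq_ex (k+1) _ _ ltac:(lia) E) as [m ->]. evtr k. reflexivity. }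
  evtr k. reflexivity.
Qed.

Ltac rescase k j x := let E := fresh "E" in let m := fresh "m" in
  destruct (Z.eq_dec (j mod (k+1)) (x mod (k+1))) as [E|?];
  [destruct (modeq_ex (k+1) _ _ ltac:(lia) E) as [m ->]; evtr k; ring|].

Lemma fun_E2 : forall k a b c d, 1 <= k -> a < b -> b < c -> c < d -> c - a <= k -> d - b <= k ->
  forall j, tr k a c (tr k c d (tr k b c j)) = tr k b c (tr k a b (tr k b d j)).
Proof.
  intros k a b c d Hk H1 H2 H3 H4 H5 j.
  assert (okd k a b) by (unfold okd; lia). assert (okd k b c) by (unfold okd; lia).
  assert (okd k a c) by (unfold okd; lia). assert (okd k c d) by (unfold okd; lia).
  assert (okd k b d) by (unfold okd; lia).
  destruct (Z.eq_dec d (a + 1*(k+1))) as [->|Nd].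
  - rescase k j a. rescase k j b. rescase k j c. evtr k. reflexivity.
  - rescase k j a. rescase k j b. rescase k j c. rescase k j d. evtr k. reflexivity.
Qed.

Lemma fun_E1 : forall k a b c d, 1 <= k -> a < b -> b < c -> c < d -> c - a <= k -> d - b <= k ->
  forall j, tr k b c (tr k c d (tr k a c j)) = tr k b d (tr k a b (tr k b c j)).
Proof.
  intros k a b c d Hk H1 H2 H3 H4 H5 j.
  assert (okd k a b) by (unfold okd; lia). assert (okd k b c) by (unfold okd; lia).
  assert (okd k a c) by (unfold okd; lia). assert (okd k c d) by (unfold okd; lia).
  assert (okd k b d) by (unfold okd; lia).
  destruct (Z.eq_dec d (a + 1*(k+1))) as [->|Nd].
  - rescase k j a. rescase k j b. rescase k j c. evtr k. reflexivity.
  - rescase k j a. rescase k j b. rescase k j c. rescase k j d. evtr k. reflexivity.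
Qed.

Lemma ne_of_mod : forall k x y m, x mod (k+1) <> y mod (k+1) -> x + m*(k+1) <> y.
Proof. intros. intro E. subst. rewrite mod_trans in H. auto. Qed.

Lemma dirA : forall k u a b c d, 1 <= k -> inW k u -> okd k a b -> okd k c d ->
  a mod (k+1) <> b mod (k+1) -> a mod (k+1) <> c mod (k+1) -> a mod (k+1) <> d mod (k+1) ->
  b mod (k+1) <> c mod (k+1) -> b mod (k+1) <> d mod (k+1) -> c mod (k+1) <> d mod (k+1) ->
  Cond u a b -> Cond (fun j => u (tr k a b j)) c d ->
  Cond u c d /\ Cond (fun j => u (tr k c d j)) a b.
Proof.
  intros k u a b c d Hk Hu Hab Hcd N1 N2 N3 N4 N5 N6 [[Ua Ub] Bab] [[Vc Vd] Bv].
  pose proof (per_mul k u (inW_per k u Hu)) as uM.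
  assert (vA : forall m, u (tr k a b (a + m*(k+1))) = u b + m*(k+1)) by (intros; evtr k; apply uM).
  assert (vB : forall m, u (tr k a b (b + m*(k+1))) = u a + m*(k+1)) by (intros; evtr k; apply uM).
  assert (wC : forall m, u (tr k c d (c + m*(k+1))) = u d + m*(k+1)) by (intros; evtr k; apply uM).
  assert (wD : forall m, u (tr k c d (d + m*(k+1))) = u c + m*(k+1)) by (intros; evtr k; apply uM).
  assert (vc : u (tr k a b c) = u c) by (evtr k; reflexivity).
  assert (vd : u (tr k a b d) = u d) by (evtr k; reflexivity).
  assert (wa : u (tr k c d a) = u a) by (evtr k; reflexivity).
  assert (wb : u (tr k c d b) = u b) by (evtr k; reflexivity).
  unfold Btw in Bv. cbv beta in *. rewrite vc, vd in *. unfold okd in Hab, Hcd.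
  assert (BCD : Btw u c d).
  { intros i Hi.
    destruct (Z.eq_dec (i mod (k+1)) (a mod (k+1))) as [E|Na].
    { destruct (modeq_ex (k+1) _ _ ltac:(lia) E) as [m ->]. rewrite uM.
      pose proof (Bv (a + m*(k+1)) Hi) as B1. rewrite vA in B1.
      destruct (Z_lt_le_dec (b + m*(k+1)) d).
      - pose proof (Bv (b + m*(k+1)) ltac:(lia)) as B2. rewrite vB in B2. lia.
      - pose proof (ne_of_mod k b d m N5).
        pose proof (Bab (d + (-m)*(k+1)) ltac:(lia)) as B2. rewrite uM in B2. lia. }
    destruct (Z.eq_dec (i mod (k+1)) (b mod (k+1))) as [E|Nb].
    { destruct (modeq_ex (k+1) _ _ ltac:(lia) E) as [m ->]. rewrite uM.
      pose proof (Bv (b + m*(k+1)) Hi) as B1. rewrite vB in B1.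
      destruct (Z_lt_le_dec c (a + m*(k+1))).
      - pose proof (Bv (a + m*(k+1)) ltac:(lia)) as B2. rewrite vA in B2. lia.
      - pose proof (ne_of_mod k a c m N2).
        pose proof (Bab (c + (-m)*(k+1)) ltac:(lia)) as B2. rewrite uM in B2. lia. }
    pose proof (Bv i Hi). rewrite (tr_o k a b i) in H by auto. auto. }
  split. split; auto.
  split. rewrite wa, wb. lia.
  intros i Hi. cbv beta. rewrite wa, wb.
  destruct (Z.eq_dec (i mod (k+1)) (c mod (k+1))) as [E|Nc].
  { destruct (modeq_ex (k+1) _ _ ltac:(lia) E) as [p ->]. rewrite wC.
    pose proof (Bab (c + p*(k+1)) Hi) as B1. rewrite uM in B1.
    destruct (Z_lt_le_dec (d + p*(k+1)) b).
    - pose proof (Bab (d + p*(k+1)) ltac:(lia)) as B2. rewrite uM in B2. lia.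
    - pose proof (ne_of_mod k d b p (not_eq_sym N5)).
      pose proof (Bv (b + (-p)*(k+1)) ltac:(lia)) as B2. rewrite vB in B2.
      pose proof (BCD (b + (-p)*(k+1)) ltac:(lia)) as B3. rewrite uM in B3. lia. }
  destruct (Z.eq_dec (i mod (k+1)) (d mod (k+1))) as [E|Nd].
  { destruct (modeq_ex (k+1) _ _ ltac:(lia) E) as [p ->]. rewrite wD.
    pose proof (Bab (d + p*(k+1)) Hi) as B1. rewrite uM in B1.
    destruct (Z_lt_le_dec a (c + p*(k+1))).
    - pose proof (Bab (c + p*(k+1)) ltac:(lia)) as B2. rewrite uM in B2. lia.
    - pose proof (ne_of_mod k c a p (not_eq_sym N2)).
      pose proof (Bv (a + (-p)*(k+1)) ltac:(lia)) as B2. rewrite vA in B2.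
      pose proof (BCD (a + (-p)*(k+1)) ltac:(lia)) as B3. rewrite uM in B3. lia. }
  rewrite (tr_o k c d i) by auto. apply Bab; auto.
Qed.

Lemma top2_S : forall k u x1 y1 x2 y2, 1 <= k -> inW k u -> okd k x1 y1 -> okd k x2 y2 ->
  Cond u x1 y1 -> Cond (fun j => u (tr k x1 y1 j)) x2 y2 ->
  top k x2 y2 (top k x1 y1 (Some u)) = Some (fun j => u (tr k x1 y1 (tr k x2 y2 j))).
Proof. intros. rewrite topS by auto. rewrite topS; auto. apply inW_tr; auto. Qed.

Lemma top2_N : forall k u x1 y1 x2 y2, 1 <= k -> inW k u -> okd k x1 y1 -> okd k x2 y2 ->
  ~ (Cond u x1 y1 /\ Cond (fun j => u (tr k x1 y1 j)) x2 y2) ->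
  top k x2 y2 (top k x1 y1 (Some u)) = None.
Proof.
  intros. destruct (classic (Cond u x1 y1)) as [C|C]; [rewrite topS by auto | rewrite topN by auto; reflexivity].
  apply topN; auto. apply inW_tr; auto.
Qed.

Lemma inW_tr2 : forall k u x1 y1 x2 y2, 1 <= k -> inW k u -> okd k x1 y1 -> okd k x2 y2 ->
  inW k (fun j => u (tr k x1 y1 (tr k x2 y2 j))).
Proof. intros. apply (inW_tr k x2 y2 (fun j => u (tr k x1 y1 j))); auto. apply inW_tr; auto. Qed.

Lemma top3_S : forall k u x1 y1 x2 y2 x3 y3, 1 <= k -> inW k u -> okd k x1 y1 -> okd k x2 y2 -> okd k x3 y3 ->
  Cond u x1 y1 -> Cond (fun j => u (tr k x1 y1 j)) x2 y2 -> Cond (fun j => u (tr k x1 y1 (tr k x2 y2 j))) x3 y3 ->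
  top k x3 y3 (top k x2 y2 (top k x1 y1 (Some u))) = Some (fun j => u (tr k x1 y1 (tr k x2 y2 (tr k x3 y3 j)))).
Proof.
  intros. rewrite top2_S by auto. rewrite topS; auto. apply inW_tr2; auto.
Qed.

Lemma top3_N : forall k u x1 y1 x2 y2 x3 y3, 1 <= k -> inW k u -> okd k x1 y1 -> okd k x2 y2 -> okd k x3 y3 ->
  ~ (Cond u x1 y1 /\ Cond (fun j => u (tr k x1 y1 j)) x2 y2 /\ Cond (fun j => u (tr k x1 y1 (tr k x2 y2 j))) x3 y3) ->
  top k x3 y3 (top k x2 y2 (top k x1 y1 (Some u))) = None.
Proof.
  intros. destruct (classic (Cond u x1 y1 /\ Cond (fun j => u (tr k x1 y1 j)) x2 y2)) as [[C1 C2]|C].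
  - rewrite top2_S by auto. apply topN; auto. apply inW_tr2; auto.
  - rewrite top2_N by auto. reflexivity.
Qed.

Lemma rel_A : forall k u a b c d, 1 <= k -> inW k u -> okd k a b -> okd k c d ->
  res k a <> res k b -> res k a <> res k c -> res k a <> res k d ->
  res k b <> res k c -> res k b <> res k d -> res k c <> res k d ->
  top k c d (top k a b (Some u)) = top k a b (top k c d (Some u)).
Proof.
  intros k u a b c d Hk Hu Hab Hcd N1 N2 N3 N4 N5 N6. unfold res in *.
  destruct (classic (Cond u a b /\ Cond (fun j => u (tr k a b j)) c d)) as [[C1 C2]|C].
  - destruct (dirA k u a b c d) as [C3 C4]; auto.
    rewrite !top2_S by auto. f_equal. apply functional_extensionality. intros j.
    rewrite fun_A; auto.
  - rewrite top2_N by auto. symmetry. apply top2_N; auto.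
    intros [C3 C4]. apply C. apply (dirA k u c d a b); auto.
Qed.

Lemma condE1 : forall k u a b c d, 1 <= k -> a < b -> b < c -> c < d -> c - a <= k -> d - b <= k ->
 (Cond u b c /\ Cond (fun j => u (tr k b c j)) c d /\ Cond (fun j => u (tr k b c (tr k c d j))) a c) <->
 (Cond u b d /\ Cond (fun j => u (tr k b d j)) a b /\ Cond (fun j => u (tr k b d (tr k a b j))) b c).
Proof.
  intros k u a b c d Hk H1 H2 H3 H4 H5.
  assert (okd k a b) by (unfold okd; lia). assert (okd k b c) by (unfold okd; lia).
  assert (okd k a c) by (unfold okd; lia). assert (okd k c d) by (unfold okd; lia).
  assert (okd k b d) by (unfold okd; lia).
  assert (e1 : forall i, c < i < d -> u (tr k b c i) = u i) by (intros; evtr k; reflexivity).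
  assert (e2a : u (tr k b c c) = u b) by (evtr k; reflexivity).
  assert (e2b : u (tr k b c d) = u d) by (evtr k; reflexivity).
  assert (e3 : u (tr k b c (tr k c d c)) = u d) by (evtr k; reflexivity).
  assert (e4 : u (tr k b c (tr k c d b)) = u c) by (evtr k; reflexivity).
  assert (e5 : forall i, b < i < c -> u (tr k b c (tr k c d i)) = u i) by (intros; evtr k; reflexivity).
  assert (e6 : forall i, a <= i < b -> u (tr k b c (tr k c d i)) = u (tr k b d i)).
  { intros i Hi. destruct (Z.eq_dec i (d + (-1)*(k+1))) as [->|Ni]; evtr k; reflexivity. }
  assert (e7 : u (tr k b d b) = u d) by (evtr k; reflexivity).
  assert (e8 : u (tr k b d (tr k a b b)) = u (tr k b d a)) by (evtr k; reflexivity).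
  assert (e9 : u (tr k b d (tr k a b c)) = u c) by (evtr k; reflexivity).
  assert (e10 : forall i, b < i < c -> u (tr k b d (tr k a b i)) = u i) by (intros; evtr k; reflexivity).
  unfold Cond, Btw. cbv beta.
  rewrite e2a, e2b, e3, (e6 a ltac:(lia)), e7, e8, e9.
  set (al := u (tr k b d a)).
  split.
  - intros [[[S1 S2] B1] [[[S3 S4] B2] [[S5 S6] B3]]].
    assert (Hdc : u d < u c) by (specialize (B3 b ltac:(lia)); rewrite e4 in B3; lia).
    split; [split; [lia|] | split; [split; [lia|] | split; [lia|]]].
    + intros i Hi. destruct (Z_lt_le_dec i c). specialize (B1 i ltac:(lia)); lia.
      destruct (Z.eq_dec i c). subst; lia. specialize (B2 i ltac:(lia)). rewrite e1 in B2 by lia. lia.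
    + intros i Hi. specialize (B3 i ltac:(lia)). rewrite e6 in B3 by lia. lia.
    + intros i Hi. rewrite e10 by lia. specialize (B3 i ltac:(lia)). rewrite e5 in B3 by lia.
      specialize (B1 i Hi). lia.
  - intros [[[S1 S2] B1] [[[S3 S4] B2] [[S5 S6] B3]]].
    assert (Hdc : u d < u c) by (specialize (B1 c ltac:(lia)); lia).
    split; [split; [lia|] | split; [split; [lia|] | split; [lia|]]].
    + intros i Hi. specialize (B1 i ltac:(lia)). specialize (B3 i Hi). rewrite e10 in B3 by lia. lia.
    + intros i Hi. rewrite e1 by lia. specialize (B1 i ltac:(lia)). lia.
    + intros i Hi. destruct (Z_lt_le_dec i b).
      * rewrite e6 by lia. specialize (B2 i ltac:(lia)). lia.
      * destruct (Z.eq_dec i b). subst; rewrite e4; lia.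
        rewrite e5 by lia. specialize (B3 i ltac:(lia)). rewrite e10 in B3 by lia. lia.
Qed.

Lemma condE2 : forall k u a b c d, 1 <= k -> a < b -> b < c -> c < d -> c - a <= k -> d - b <= k ->
 (Cond u a c /\ Cond (fun j => u (tr k a c j)) c d /\ Cond (fun j => u (tr k a c (tr k c d j))) b c) <->
 (Cond u b c /\ Cond (fun j => u (tr k b c j)) a b /\ Cond (fun j => u (tr k b c (tr k a b j))) b d).
Proof.
  intros k u a b c d Hk H1 H2 H3 H4 H5.
  assert (okd k a b) by (unfold okd; lia). assert (okd k b c) by (unfold okd; lia).
  assert (okd k a c) by (unfold okd; lia). assert (okd k c d) by (unfold okd; lia).
  assert (okd k b d) by (unfold okd; lia).
  assert (f1 : u (tr k a c c) = u a) by (evtr k; reflexivity).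
  assert (f2 : u (tr k b c (tr k a b d)) = u (tr k a c d)).
  { destruct (Z.eq_dec d (a + 1*(k+1))) as [Ed|Nd]; evtr k; f_equal; lia. }
  assert (f3 : forall i, c < i < d -> u (tr k b c (tr k a b i)) = u (tr k a c i)).
  { intros i Hi. destruct (Z.eq_dec i (a + 1*(k+1))) as [Ed|Nd]; evtr k; f_equal; lia. }
  assert (f4 : u (tr k a c (tr k c d b)) = u b) by (evtr k; reflexivity).
  assert (f5 : u (tr k a c (tr k c d c)) = u (tr k a c d)) by (evtr k; reflexivity).
  assert (f6 : forall i, b < i < c -> u (tr k a c (tr k c d i)) = u i) by (intros; evtr k; reflexivity).
  assert (f7a : u (tr k b c a) = u a) by (evtr k; reflexivity).
  assert (f7b : u (tr k b c b) = u c) by (evtr k; reflexivity).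
  assert (f8 : forall i, a < i < b -> u (tr k b c i) = u i) by (intros; evtr k; reflexivity).
  assert (f9 : u (tr k b c (tr k a b b)) = u a) by (evtr k; reflexivity).
  assert (f10 : u (tr k b c (tr k a b c)) = u b) by (evtr k; reflexivity).
  assert (f11 : forall i, b < i < c -> u (tr k b c (tr k a b i)) = u i) by (intros; evtr k; reflexivity).
  unfold Cond, Btw. cbv beta.
  rewrite f1, f2, f4, f5, f7a, f7b, f9.
  set (de := u (tr k a c d)).
  split.
  - intros [[[S1 S2] B1] [[[S3 S4] B2] [[S5 S6] B3]]].
    assert (Hba : u b < u a) by (specialize (B1 b ltac:(lia)); lia).
    split; [split; [lia|] | split; [split; [lia|] | split; [lia|]]].
    + intros i Hi. specialize (B1 i ltac:(lia)). specialize (B3 i Hi). rewrite f6 in B3 by lia. lia.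
    + intros i Hi. rewrite f8 by lia. specialize (B1 i ltac:(lia)). lia.
    + intros i Hi. destruct (Z_lt_le_dec i c).
      * rewrite f11 by lia. specialize (B3 i ltac:(lia)). rewrite f6 in B3 by lia. lia.
      * destruct (Z.eq_dec i c). subst; rewrite f10; lia.
        rewrite f3 by lia. specialize (B2 i ltac:(lia)). lia.
  - intros [[[S1 S2] B1] [[[S3 S4] B2] [[S5 S6] B3]]].
    assert (Hba : u b < u a) by (specialize (B3 c ltac:(lia)); rewrite f10 in B3; lia).
    split; [split; [lia|] | split; [split; [lia|] | split; [lia|]]].
    + intros i Hi. destruct (Z_lt_le_dec i b).
      * specialize (B2 i ltac:(lia)). rewrite f8 in B2 by lia. lia.
      * destruct (Z.eq_dec i b). subst; lia. specialize (B1 i ltac:(lia)). lia.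
    + intros i Hi. specialize (B3 i ltac:(lia)). rewrite f3 in B3 by lia. lia.
    + intros i Hi. rewrite f6 by lia. specialize (B1 i Hi). specialize (B3 i ltac:(lia)).
      rewrite f11 in B3 by lia. lia.
Qed.

Lemma rel_E1 : forall k u a b c d, 1 <= k -> inW k u -> a < b -> b < c -> c < d -> c - a <= k -> d - b <= k ->
  top k a c (top k c d (top k b c (Some u))) = top k b c (top k a b (top k b d (Some u))).
Proof.
  intros k u a b c d Hk Hu H1 H2 H3 H4 H5.
  assert (okd k a b) by (unfold okd; lia). assert (okd k b c) by (unfold okd; lia).
  assert (okd k a c) by (unfold okd; lia). assert (okd k c d) by (unfold okd; lia).
  assert (okd k b d) by (unfold okd; lia).
  pose proof (condE1 k u a b c d Hk H1 H2 H3 H4 H5) as E.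
  destruct (classic (Cond u b c /\ Cond (fun j => u (tr k b c j)) c d /\ Cond (fun j => u (tr k b c (tr k c d j))) a c)) as [C|C].
  - destruct C as [C1 [C2 C3]]. destruct (proj1 E (conj C1 (conj C2 C3))) as [D1 [D2 D3]].
    rewrite !top3_S by auto. f_equal. apply functional_extensionality; intros j. rewrite fun_E1; auto.
  - rewrite top3_N by auto. symmetry. apply top3_N; auto. rewrite <- E. auto.
Qed.

Lemma rel_E2 : forall k u a b c d, 1 <= k -> inW k u -> a < b -> b < c -> c < d -> c - a <= k -> d - b <= k ->
  top k b c (top k c d (top k a c (Some u))) = top k b d (top k a b (top k b c (Some u))).
Proof.
  intros k u a b c d Hk Hu H1 H2 H3 H4 H5.
  assert (okd k a b) by (unfold okd; lia). assert (okd k b c) by (unfold okd; lia).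
  assert (okd k a c) by (unfold okd; lia). assert (okd k c d) by (unfold okd; lia).
  assert (okd k b d) by (unfold okd; lia).
  pose proof (condE2 k u a b c d Hk H1 H2 H3 H4 H5) as E.
  destruct (classic (Cond u a c /\ Cond (fun j => u (tr k a c j)) c d /\ Cond (fun j => u (tr k a c (tr k c d j))) b c)) as [C|C].
  - destruct C as [C1 [C2 C3]]. destruct (proj1 E (conj C1 (conj C2 C3))) as [D1 [D2 D3]].
    rewrite !top3_S by auto. f_equal. apply functional_extensionality; intros j. rewrite fun_E2; auto.
  - rewrite top3_N by auto. symmetry. apply top3_N; auto. rewrite <- E. auto.
Qed.

Theorem mainTheorem1 :
  forall (k : Z), 1 <= k ->
  forall (u : Z -> Z), inW0 k u ->
  (* (A) *)
  (forall a b c d, okd k a b -> okd k c d ->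
     res k a <> res k b -> res k a <> res k c -> res k a <> res k d ->
     res k b <> res k c -> res k b <> res k d -> res k c <> res k d ->
     top k c d (top k a b (Some u)) = top k a b (top k c d (Some u))) /\
  (* (B1) *)
  (forall a b c d, okd k a b -> okd k c d ->
     ((a < c /\ c < b /\ b < d) \/ (b = c /\ d - a > k + 1)) ->
     top k c d (top k a b (Some u)) = top k a b (top k c d (Some u)) /\
     top k a b (top k c d (Some u)) = None) /\
  (* (B2) *)
  (forall a b c d, okd k a b -> okd k c d ->
     ((res k a = res k c /\ b <= d) \/ (res k b = res k d /\ c <= a)) ->
     top k c d (top k a b (Some u)) = None) /\
  (* (C1) *)
  (forall a b d, okd k a b -> okd k b d -> okd k (b - k - 1) a ->
     a < b -> b < d -> d - a = k + 1 ->
     top k b d (top k a b (Some u)) = top k (b - k - 1) a (top k a b (Some u))) /\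
  (* (D) *)
  (forall a b c d, okd k a b -> okd k c d -> okd k (d - k - 1) c -> okd k (b - k - 1) a ->
     a < b -> b < c -> c < d -> res k b = res k c -> res k d = res k a ->
     (b - a) + (d - c) = k + 1 ->
     top k c d (top k a b (Some u)) = top k (b - k - 1) a (top k (d - k - 1) c (Some u))) /\
  (* (E1) *)
  (forall a b c d, okd k b c -> okd k c d -> okd k a c -> okd k b d -> okd k a b ->
     a < b -> b < c -> c < d -> c - a <= k -> d - b <= k ->
     top k a c (top k c d (top k b c (Some u)))
       = top k b c (top k a b (top k b d (Some u)))) /\
  (* (E2) *)
  (forall a b c d, okd k a c -> okd k c d -> okd k b c -> okd k a b -> okd k b d ->
     a < b -> b < c -> c < d -> c - a <= k -> d - b <= k ->
     top k b c (top k c d (top k a c (Some u)))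
       = top k b d (top k a b (top k b c (Some u)))) /\
  (* (F) *)
  (forall a b c, okd k a b -> okd k b c ->
     a < b -> b < c -> c - a < k + 1 ->
     top k b c (top k a b (top k b c (Some u)))
       = top k a b (top k b c (top k a b (Some u))) /\
     top k a b (top k b c (top k a b (Some u))) = None).
Proof.
  intros k Hk u Hu0.
  assert (Hu : inW k u) by apply Hu0.
  split; [|split; [|split; [|split; [|split; [|split; [|split]]]]]].
  - intros a b c d H1 H2 N1 N2 N3 N4 N5 N6. apply rel_A; auto.
  - intros a b c d H1 H2 H3. destruct (rel_B1 k u a b c d Hk Hu0 H1 H2 H3) as [X Y].
    rewrite X, Y. split; reflexivity.
  - intros a b c d H1 H2 H3. apply rel_B2; auto.
  - intros a b d H1 H2 H3 H4 H5 H6. apply rel_C1; auto.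
  - intros a b c d H1 H2 H3 H4 H5 H6 H7 H8 H9 H10. apply rel_D; auto.
  - intros a b c d _ _ _ _ _ H1 H2 H3 H4 H5. apply rel_E1; auto.
  - intros a b c d _ _ _ _ _ H1 H2 H3 H4 H5. apply rel_E2; auto.
  - intros a b c H1 H2 H3 H4 H5. destruct (rel_F k u a b c Hk Hu H1 H2 H3 H4 H5) as [X Y].
    rewrite X, Y. split; reflexivity.
Qed.
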